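(* Let $\bar B>0$, $\gamma>0$, and let $\{E_t\}_{t\ge1}$ be i.i.d. non-negative with $\mathbb{E}[E_t]>0$. Let $\mathbf{g}$ be a policy that is admissible when the initial battery level is $b_1=\bar{B}$. Then for every $\epsilon>0$ there exists a policy $\tilde{\mathbf{g}}$ that is admissible when the initial battery level is $b_1=0$ and satisfies \[ \liminf_{n\to\infty}\mathscr{T}_n(\tilde{\mathbf{g}})\geq \liminf_{n\to\infty}\mathscr{T}_n(\mathbf{g})-\epsilon, \] where the throughput of $\mathbf{g}$ is computed with $b_1=\bar B$ and that of $\tilde{\mathbf{g}}$ with $b_1=0$.
   Context: An online policy $\mathbf{g}=\{g_t\}_{t\ge1}$ is a sequence of maps $g_t$ from $(E_1,\ldots,E_t)$ to $\mathbb{R}_+$. It is admissible for initial battery level $b_1$ if for every realization of the arrivals, $0\le g_t\le b_t$ for all $t\ge1$, where $b_t=\min\{b_{t-1}-g_{t-1}+E_t,\bar{B}\}$ for $t\ge 2$. The $n$-horizon expected throughput is $\mathscr{T}_n(\mathbf{g})=\frac{1}{n}\mathbb{E}\big[\sum_{t=1}^{n}\frac12\log_2(1+\gamma g_t(E_1,\ldots,E_t))\big]$. *)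

(* Defs.v *)
From HB Require Import structures.
From mathcomp Require Import all_boot all_order all_algebra.
From mathcomp Require Import all_classical all_reals all_analysis.
Set Implicit Arguments. Unset Strict Implicit. Unset Printing Implicit Defensive.
Import Order.TTheory GRing.Theory Num.Theory.
Import numFieldNormedType.Exports.
Local Open Scope classical_set_scope.
Local Open Scope ring_scope.

Section EH.
Context {d : measure_display} {T : measurableType d} {R : realType}
  (P : probability T R).

Definition mutually_independent (E : nat -> {RV P >-> R}) : Prop :=
  forall (I : seq nat) (A : nat -> set R), uniq I ->
    (forall i, measurable (A i)) ->
    P (\bigcap_(i in [set` I]) (E i @^-1` A i)) =
    (\prod_(i <- I) P (E i @^-1` A i))%E.

Definition identically_distributed (E : nat -> {RV P >-> R}) : Prop :=
  forall (t : nat) (A : set R), measurable A ->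
    P (E t @^-1` A) = P (E 0%N @^-1` A).

Definition iid (E : nat -> {RV P >-> R}) : Prop :=
  mutually_independent E /\ identically_distributed E.

(* Time is 0-based: index t here is time t+1 of the paper.
   A policy g : nat -> seq R -> R; the action at (0-based) time t is
   g t [:: E_0; ...; E_t] (the arrivals observed so far). *)
Definition action (E : nat -> {RV P >-> R}) (g : nat -> seq R -> R)
  (t : nat) (w : T) : R :=
  g t [seq E i w | i <- iota 0 t.+1].

Fixpoint battery (E : nat -> {RV P >-> R}) (Bbar b1 : R)
  (g : nat -> seq R -> R) (t : nat) (w : T) : R :=
  match t with
  | 0%N => b1
  | t'.+1 => Num.min (battery E Bbar b1 g t' w - action E g t' w + E t w) Bbar
  end.

Definition policy_measurable (E : nat -> {RV P >-> R}) (g : nat -> seq R -> R)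
  : Prop :=
  forall t, measurable_fun setT (action E g t).

Definition admissible (E : nat -> {RV P >-> R}) (Bbar b1 : R)
  (g : nat -> seq R -> R) : Prop :=
  forall (t : nat) (w : T),
    0 <= action E g t w /\ action E g t w <= battery E Bbar b1 g t w.

Definition log2 (x : R) : R := ln x / ln 2.

Definition throughput (E : nat -> {RV P >-> R}) (gamma : R)
  (g : nat -> seq R -> R) (n : nat) : \bar R :=
  ((n%:R)^-1)%:E *
  ('E_P[fun w => (\sum_(t < n) (2^-1 * log2 (1 + gamma * action E g t w)))%R])%E.

End EH.

(* Main.v *)
Require Import Defs.
From HB Require Import structures.
From mathcomp Require Import all_boot all_order all_algebra.
From mathcomp Require Import all_classical all_reals all_analysis.
From mathcomp Require Import ring lra measurable_realfun.
Import Order.TTheory GRing.Theory Num.Theory.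
Local Open Scope classical_set_scope.
Local Open Scope ring_scope.

Fixpoint bbat {R : realType} (Bbar : R) (g : nat -> seq R -> R) (k : nat) (s : seq R) : R :=
  match k with
  | 0%N => 0
  | k'.+1 => Num.min (bbat Bbar g k' s - Num.min (g k' (take k'.+1 s)) (bbat Bbar g k' s)
                      + nth 0 s k'.+1) Bbar
  end.

Definition gtil {R : realType} (Bbar : R) (g : nat -> seq R -> R) (t : nat) (s : seq R) : R :=
  Num.min (g t s) (bbat Bbar g t s).

Lemma bbatS {R : realType} (Bbar : R) g k s : bbat Bbar g k.+1 s =
  Num.min (bbat Bbar g k s - Num.min (g k (take k.+1 s)) (bbat Bbar g k s)
                      + nth 0 s k.+1) Bbar.
Proof. by []. Qed.

Lemma bbat_battery d (T : measurableType d) (R : realType) (P : probability T R)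
  (E : nat -> {RV P >-> R}) (Bbar : R) (g : nat -> seq R -> R) w k t :
  (k <= t)%N ->
  bbat Bbar g k [seq E i w | i <- iota 0 t.+1] = battery E Bbar 0 (gtil Bbar g) k w.
Proof.
elim: k t => [//|k IH] t kt.
have Ht : take k.+1 [seq E i w | i <- iota 0 t.+1] = [seq E i w | i <- iota 0 k.+1].
  by rewrite -map_take take_iota; congr (map _ (iota _ _)); apply/minn_idPl; apply: ltnW.
have Hn : nth 0 [seq E i w | i <- iota 0 t.+1] k.+1 = E k.+1 w.
  by rewrite (nth_map 0%N) ?size_iota // nth_iota.
rewrite bbatS Ht Hn.
have -> : battery E Bbar 0 (gtil Bbar g) k.+1 w = Num.min (battery E Bbar 0 (gtil Bbar g) k w
   - action E (gtil Bbar g) k w + E k.+1 w) Bbar by [].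
rewrite /action /gtil -(IH k) // IH ?(ltnW kt) // -(IH k) //.
Qed.

Lemma action_gtil d (T : measurableType d) (R : realType) (P : probability T R)
  (E : nat -> {RV P >-> R}) (Bbar : R) (g : nat -> seq R -> R) t w :
  action E (gtil Bbar g) t w = Num.min (action E g t w) (battery E Bbar 0 (gtil Bbar g) t w).
Proof. by rewrite /action /gtil bbat_battery. Qed.
Lemma min_diff {R : realType} (x y B : R) : y <= x ->
  0 <= Num.min x B - Num.min y B <= x - y.
Proof.
move=> yx; rewrite !minEle; case: (lerP x B); case: (lerP y B) => *; apply/andP; split.
all: lra.
Qed.

Lemma seq_ineq {R : realType} (B : R) (a e bg bt c : nat -> R) :
 (forall t, 0 <= a t <= bg t) -> (forall t, 0 <= e t) -> bg 0%N = B -> bt 0%N = 0 ->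
 (forall t, c t = Num.min (a t) (bt t)) ->
 (forall t, bg t.+1 = Num.min (bg t - a t + e t.+1) B) ->
 (forall t, bt t.+1 = Num.min (bt t - c t + e t.+1) B) ->
 forall n, 0 <= bg n - bt n /\ \sum_(t < n) (a t - c t) + (bg n - bt n) <= B.
Proof.
move=> ha he hg0 ht0 hc hg ht; elim=> [|n [IH1 IH2]].
  move: (ha 0%N); rewrite hg0 => /andP[? ?].
  by rewrite big_ord0 ht0; split; lra.
have hyx : bt n - c n + e n.+1 <= bg n - a n + e n.+1.
  have /andP[a0 ab] := ha n.
  rewrite hc minEle; case: (lerP (a n) (bt n)) => *; lra.
have /andP[h1 h2] := min_diff _ _ B hyx.
rewrite big_ord_recr /= hg ht; split => //.
have hac : c n <= a n by rewrite hc ge_min lexx.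
lra.
Qed.
Lemma ln2_gt0 {R : realType} : 0 < ln (2 : R).
Proof. by apply: ln_gt0; lra. Qed.

Lemma ln_diff {R : realType} (gamma a c : R) : 0 < gamma -> 0 <= c -> c <= a ->
  ln (1 + gamma * a) - ln (1 + gamma * c) <= gamma * (a - c).
Proof.
move=> g0 c0 ca.
have p1 : 0 < 1 + gamma * c by have := mulr_ge0 (ltW g0) c0; lra.
have p2 : 0 < 1 + gamma * a.
  have := mulr_ge0 (ltW g0) (le_trans c0 ca); lra.
rewrite -ln_div ?posrE //.
have -> : (1 + gamma * a) / (1 + gamma * c) = 1 + gamma * (a - c) / (1 + gamma * c).
  by field; apply: lt0r_neq0.
apply: le_trans (le_ln1Dx _) _.
  have : 0 <= gamma * (a - c) / (1 + gamma * c).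
    by apply: divr_ge0; [apply: mulr_ge0; lra | lra].
  lra.
rewrite ler_pdivrMr //.
have : 0 <= gamma * (a - c) * (gamma * c) by apply: mulr_ge0; apply: mulr_ge0; lra.
lra.
Qed.

Definition ff {R : realType} (gamma x : R) : R := 2^-1 * log2 (1 + gamma * x).

Lemma ff_ge0 {R : realType} (gamma x : R) : 0 < gamma -> 0 <= x -> 0 <= ff gamma x.
Proof.
move=> g0 x0; rewrite /ff /log2; apply: mulr_ge0; first lra.
apply: divr_ge0; last exact: ltW ln2_gt0.
apply: ln_ge0; have := mulr_ge0 (ltW g0) x0; lra.
Qed.

Lemma ff_diff {R : realType} (gamma a c : R) : 0 < gamma -> 0 <= c -> c <= a ->
  ff gamma a - ff gamma c <= (gamma / (2 * ln 2)) * (a - c).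
Proof.
move=> g0 c0 ca; rewrite /ff /log2.
have l2 := @ln2_gt0 R.
have h := ln_diff _ _ _ g0 c0 ca.
have -> : 2^-1 * (ln (1 + gamma * a) / ln 2) - 2^-1 * (ln (1 + gamma * c) / ln 2)
  = (ln (1 + gamma * a) - ln (1 + gamma * c)) / (2 * ln 2).
  by field; apply: lt0r_neq0.
have -> : gamma / (2 * ln 2) * (a - c) = gamma * (a - c) / (2 * ln 2) by field; apply: lt0r_neq0.
by rewrite ler_pM2r // invr_gt0; lra.
Qed.

Lemma limn_einf_le_from {R : realType} (u v : (\bar R)^nat) N :
  (forall n, (N <= n)%N -> (u n <= v n)%E) -> (limn_einf u <= limn_einf v)%E.
Proof.
move=> uv; rewrite !limn_einf_lim; apply: lee_lim; [exact: is_cvg_einfs|exact: is_cvg_einfs|].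
exists N => // n /= Nn.
apply: le_ereal_inf_tmp => _ [k /= nk <-].
apply: le_trans (uv k (leq_trans Nn nk)).
by apply: ereal_inf_lbound; exists k.
Qed.

Theorem proposition6 (d : measure_display) (T : measurableType d)
  (R : realType) (P : probability T R) (E : nat -> {RV P >-> R})
  (Bbar gamma : R) (g : nat -> seq R -> R) :
  0 < Bbar -> 0 < gamma ->
  iid E -> (forall t w, 0 <= E t w) -> ('E_P[E 0%N] > 0)%E ->
  policy_measurable E g -> admissible E Bbar Bbar g ->
  forall eps : R, 0 < eps ->
  exists gt : nat -> seq R -> R,
    policy_measurable E gt /\ admissible E Bbar 0 gt /\
    (limn_einf (throughput E gamma gt) >=
     limn_einf (throughput E gamma g) - eps%:E)%E.
Proof.
move=> B0 g0 _ E0 _ mg adm eps e0.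
set gt := gtil Bbar g.
have hbS k w : battery E Bbar 0 gt k.+1 w =
   Num.min (battery E Bbar 0 gt k w - action E gt k w + E k.+1 w) Bbar by [].
have hgS k w : battery E Bbar Bbar g k.+1 w =
   Num.min (battery E Bbar Bbar g k w - action E g k w + E k.+1 w) Bbar by [].
have hact t : action E gt t = (fun w => Num.min (action E g t w) (battery E Bbar 0 gt t w)).
  by apply/funext => w; exact: action_gtil.
have mb k : measurable_fun setT (battery E Bbar 0 gt k).
  elim: k => [|k IH]; first exact: measurable_cst.
  have -> : battery E Bbar 0 gt k.+1 = (fun w =>
     Num.min (battery E Bbar 0 gt k w - action E gt k w + E k.+1 w) Bbar) by [].
  apply: measurable_minr; last exact: measurable_cst.
  apply: measurable_funD; last exact: measurable_funP.
  apply: measurable_funB => //; rewrite hact.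
  by apply: measurable_minr => //; exact: mg.
have mact : policy_measurable E gt.
  by move=> t; rewrite hact; apply: measurable_minr => //; exact: mg.
have bt0 k w : 0 <= battery E Bbar 0 gt k w.
  elim: k => [|k IH] //; rewrite hbS action_gtil.
  have hm : Num.min (action E g k w) (battery E Bbar 0 gt k w) <= battery E Bbar 0 gt k w.
    by rewrite ge_min lexx orbT.
  have := E0 k.+1 w => ?; rewrite le_min; apply/andP; split; [lra| exact: ltW].
have adm' : admissible E Bbar 0 gt.
  move=> t w; rewrite action_gtil; split; last by rewrite ge_min lexx orbT.
  have [a0 _] := adm t w.
  by rewrite le_min a0 bt0.
pose K := gamma / (2 * ln 2).
have K0 : 0 <= K by apply: divr_ge0; [exact: ltW|have := @ln2_gt0 R; lra].
have path n w : \sum_(t < n) ff gamma (action E g t w) <=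
    \sum_(t < n) ff gamma (action E gt t w) + K * Bbar.
  have ha t : 0 <= action E g t w <= battery E Bbar Bbar g t w.
    by have [? ?] := adm t w; apply/andP.
  have [h1 h2] := seq_ineq Bbar (fun t => action E g t w) (fun t => E t w)
    (fun t => battery E Bbar Bbar g t w) (fun t => battery E Bbar 0 gt t w)
    (fun t => action E gt t w) ha (fun t => E0 t w) (erefl _) (erefl _)
    (fun t => action_gtil _ _ _ _ E Bbar g t w) (fun t => hgS t w) (fun t => hbS t w) n.
  rewrite -lerBlDl -sumrB.
  apply: (@le_trans _ _ (\sum_(t < n) K * (action E g t w - action E gt t w))).
    apply: ler_sum => t _; apply: ff_diff => //.
      by have [] := adm' t w.
    by rewrite action_gtil ge_min lexx.
  rewrite -mulr_sumr; apply: ler_wpM2l => //; lra.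
have mff : measurable_fun setT (ff gamma).
  rewrite /ff /log2.
  apply: measurable_funM; first exact: measurable_cst.
  apply: measurable_funM; last exact: measurable_cst.
  apply: measurableT_comp; first exact: measurable_ln.
  apply: measurable_funD; first exact: measurable_cst.
  apply: measurable_funM; first exact: measurable_cst.
  exact: measurable_id.
have mX (h : nat -> seq R -> R) n : policy_measurable E h ->
   measurable_fun setT (fun w => \sum_(t < n) ff gamma (action E h t w)).
  move=> mh; apply: measurable_sum => t.
  exact: measurableT_comp mff (mh t).
have thr n : (throughput E gamma g n <=
    throughput E gamma gt n + ((n%:R)^-1 * (K * Bbar))%:E)%E.
  rewrite /throughput unlock.
  set Xg := fun w => \sum_(t < n) ff gamma (action E g t w).
  set Xt := fun w => \sum_(t < n) ff gamma (action E gt t w).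
  have Xt0 w : 0 <= Xt w.
    by apply: sumr_ge0 => t _; apply: ff_ge0 => //; have [] := adm' t w.
  have Xg0 w : 0 <= Xg w.
    by apply: sumr_ge0 => t _; apply: ff_ge0 => //; have [] := adm t w.
  have I : (\int[P]_w (Xg w)%:E <= \int[P]_w (Xt w)%:E + (K * Bbar)%:E)%E.
    have -> : ((K * Bbar)%:E = \int[P]_w ((cst (K * Bbar)) w)%:E)%E.
      by have := expectation_cst P (K * Bbar); rewrite unlock.
    rewrite -ge0_integralD //.
    - apply: ge0_le_integral => //.
      + by move=> w _; rewrite lee_fin.
      + by apply/measurable_EFinP; exact: mX.
      + apply: emeasurable_funD; first by apply/measurable_EFinP; exact: mX.
        by apply/measurable_EFinP; exact: measurable_cst.
      + by move=> w _; rewrite -EFinD lee_fin; exact: path.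
    - by move=> w _; rewrite lee_fin.
    - by apply/measurable_EFinP; exact: mX.
    - by move=> w _; rewrite lee_fin; apply: mulr_ge0 => //; exact: ltW.
    - by apply/measurable_EFinP; exact: measurable_cst.
  rewrite EFinM -ge0_muleDr.
  - by apply: lee_wpmul2l; [rewrite lee_fin invr_ge0|exact: I].
  - by apply: integral_ge0 => w _; exact: (Xt0 w).
  - by apply: (mulr_ge0 K0 (ltW B0)).
exists gt; split; first exact: mact.
split; first exact: adm'.
rewrite addeC -limn_einf_shift //.
apply: (@limn_einf_le_from _ _ _ (Num.truncn (K * Bbar / eps)).+1) => n Nn.
have hn : (n%:R)^-1 * (K * Bbar) <= eps.
  have hlt := truncnS_gt (K * Bbar / eps).
  have hN : ((Num.truncn (K * Bbar / eps)).+1%:R <= n%:R :> R) by rewrite ler_nat.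
  have np : 0 < n%:R :> R by apply: lt_le_trans hN; rewrite ltr0Sn.
  have h1 : K * Bbar / eps < n%:R by apply: lt_le_trans hN.
  rewrite ltr_pdivrMr // in h1.
  rewrite mulrC ler_pdivrMr //; lra.
rewrite addeC leeBlDr //.
apply: le_trans (thr n) _.
by rewrite leeD2l // lee_fin.
Qed.
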